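(* Let $N\ge 3$, $\Delta\theta^*=2\pi/N$, $P\neq0$, and let $(\theta_k,\omega_k)_{k\ge1}$ be a solution of $$\theta_{k+1}=\theta_k+\Delta\theta^*,\qquad \omega_{k+1}-\omega_k=P\sin\theta_k\left[\frac{1}{\omega_k}+\frac{1}{\omega_{k+1}}\right]\quad(k\ge1)$$ with $\omega_k>0$, $\omega_k^2>|P|$ for all $k$, and $\theta_{k_0}\bmod 2\pi\in\{0,\Delta\theta^*/2\}$ for some $k_0$ (so it is $N$-periodic). Then this periodic orbit is stable but not attractive, in the following sense. Fix an index $k_1$ and $\varepsilon\neq 0$, and let $(\omega'_k)_{k\ge1}$ be a positive sequence with $\omega'_{k_1}=\omega_{k_1}+\varepsilon$ satisfying the same recurrence with the same $(\theta_k)$ and $(\omega'_k)^2>|P|$ for all $k$. Then $(\theta_k,\omega'_k)$ is again $N$-periodic, $\omega'_k\neq\omega_k$ for every $k$ (so the perturbed solution does not converge to the original periodic orbit), and $\sup_k|\omega'_k-\omega_k|\to 0$ as $\varepsilon\to 0$.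
   Context: This is the ''discrete zero dynamics'' of a devil-stick with $\phi=\pm\pi/2$; in the paper $P=\pm\frac{g(\Delta\theta^* )^2}{2R\sin(\Delta\theta^* )}$ with constants $g,R>0$. The condition $\omega_k^2>|P|$ for all $k$ is the paper's Assumption 1. *)

(* Defs.v *)
(* concrete reals R. Sequences are indexed by nat; only k >= 1 is used. *)
From Stdlib Require Export Reals.
Open Scope R_scope.

Definition dtheta (N : nat) : R := 2 * PI / INR N.

Definition zd_rec (P : R) (theta omega : nat -> R) : Prop :=
  forall k : nat, (1 <= k)%nat ->
    omega (S k) - omega k = P * sin (theta k) * (1 / omega k + 1 / omega (S k)).

Definition admissible (P : R) (omega : nat -> R) : Prop :=
  forall k : nat, (1 <= k)%nat -> 0 < omega k /\ Rabs P < omega k ^ 2.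

Definition perturbed (P : R) (theta omega : nat -> R) (k1 : nat) (eps : R)
  (omega' : nat -> R) : Prop :=
  omega' k1 = omega k1 + eps /\ zd_rec P theta omega' /\ admissible P omega'.

Definition periodic_from1 (N : nat) (u : nat -> R) : Prop :=
  forall k : nat, (1 <= k)%nat -> u (k + N)%nat = u k.

(* Main.v *)
Require Import Defs.
From Stdlib Require Import Reals ZArith.
From Stdlib Require Import Lra Lia Psatz.
Open Scope R_scope.

Definition step (a x y : R) : Prop := y - x = a * (1 / x + 1 / y).

Lemma prod_gt p y y' : 0 < y -> 0 < y' -> p < y ^ 2 -> p < y' ^ 2 -> p < y * y'.
Proof. intros. destruct (Rle_dec y y'); nra. Qed.

Lemma fwd_unique a p x y y' : 0 < x -> 0 < y -> 0 < y' -> p < y ^ 2 -> p < y' ^ 2 ->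
  Rabs a <= p -> step a x y -> step a x y' -> y = y'.
Proof.
  unfold step; intros hx hy hy' h1 h2 ha s1 s2.
  assert (hp := prod_gt p y y' hy hy' h1 h2).
  assert (H : y - y' = a * (1 / y - 1 / y')) by lra.
  assert (H2 : (y - y') * (y * y') = a * (y' - y)) by (rewrite H; field; lra).
  assert (H3 : (y - y') * (y * y' + a) = 0) by nra.
  assert (-p <= a) by (unfold Rabs in ha; destruct (Rcase_abs a); lra).
  apply Rmult_integral in H3; destruct H3; lra.
Qed.

Lemma bwd_unique a p x x' y : 0 < x -> 0 < x' -> 0 < y -> p < x ^ 2 -> p < x' ^ 2 ->
  Rabs a <= p -> step a x y -> step a x' y -> x = x'.
Proof.
  unfold step; intros hx hx' hy h1 h2 ha s1 s2.
  assert (hp := prod_gt p x x' hx hx' h1 h2).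
  assert (H : x' - x = a * (1 / x - 1 / x')) by lra.
  assert (H2 : (x' - x) * (x * x') = a * (x' - x)) by (rewrite H at 1; field; lra).
  assert (H3 : (x' - x) * (x * x' - a) = 0) by nra.
  assert (a <= p) by (unfold Rabs in ha; destruct (Rcase_abs a); lra).
  apply Rmult_integral in H3; destruct H3; lra.
Qed.

Lemma step_flip a x y : x <> 0 -> y <> 0 -> step a x y -> step (- a) y x.
Proof. unfold step; intros; lra. Qed.

Lemma step_zero x y : step 0 x y -> y = x.
Proof. unfold step; intros; lra. Qed.

Lemma sin_periodZ x (K : Z) : sin (x + 2 * PI * IZR K) = sin x.
Proof.
  destruct (Z_le_gt_dec 0 K) as [h|h].
  - rewrite <- (Z2Nat.id K h), <- INR_IZR_INZ.
    replace (x + 2 * PI * INR (Z.to_nat K)) with (x + 2 * INR (Z.to_nat K) * PI) by ring.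
    apply sin_period.
  - assert (h' : (0 <= - K)%Z) by lia.
    pose proof (sin_period (x + 2 * PI * IZR K) (Z.to_nat (- K))) as E.
    rewrite INR_IZR_INZ, Z2Nat.id, opp_IZR in E by exact h'.
    rewrite <- E; f_equal; ring.
Qed.


Lemma abs_Psin P t : Rabs (P * sin t) <= Rabs P.
Proof.
  rewrite Rabs_mult. pose proof (SIN_bound t).
  assert (Rabs (sin t) <= 1) by (unfold Rabs; destruct (Rcase_abs (sin t)); lra).
  pose proof (Rabs_pos P). nra.
Qed.

Lemma zd_step P theta w k : zd_rec P theta w -> (1 <= k)%nat ->
  step (P * sin (theta k)) (w k) (w (S k)).
Proof. intros H h; exact (H k h). Qed.

Lemma refl_gen P theta w (S0 : nat) :
  zd_rec P theta w -> admissible P w ->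
  (forall a b, (1 <= a)%nat -> (1 <= b)%nat -> (a + b = S0)%nat ->
     sin (theta a) = - sin (theta b)) ->
  forall d a, (1 <= a)%nat -> (a + (a + d) = S S0)%nat -> w a = w (a + d)%nat.
Proof.
  intros Hz Ha Hs.
  assert (forall d, (forall a, (1 <= a)%nat -> (a + (a + d) = S S0)%nat -> w a = w (a + d)%nat) /\
                    (forall a, (1 <= a)%nat -> (a + (a + S d) = S S0)%nat -> w a = w (a + S d)%nat)).
  { induction d as [|d [IH1 IH2]].
    - split.
      + intros a _ _. now rewrite Nat.add_0_r.
      + intros a h1 h2.
        assert (e : sin (theta a) = - sin (theta a)) by (apply Hs; lia).
        assert (e0 : sin (theta a) = 0) by lra.
        pose proof (zd_step P theta w a Hz h1) as st. rewrite e0, Rmult_0_r in st.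
        apply step_zero in st. rewrite <- st. f_equal; lia.
    - split; [exact IH2|].
      intros a h1 h2.
      assert (E1 : w (S a) = w (S a + d)%nat) by (apply IH1; lia).
      pose proof (zd_step P theta w (S a + d)%nat Hz ltac:(lia)) as st1.
      pose proof (zd_step P theta w a Hz h1) as st2.
      destruct (Ha a h1) as [p1 q1]. destruct (Ha (S a) ltac:(lia)) as [p2 q2].
      apply step_flip in st2; try lra.
      assert (e : sin (theta a) = - sin (theta (S a + d)%nat)) by (apply Hs; lia).
      rewrite e, E1 in st2. replace (- (P * - sin (theta (S a + d)%nat))) with
        (P * sin (theta (S a + d)%nat)) in st2 by ring.
      destruct (Ha (S a + d)%nat ltac:(lia)) as [p3 q3].
      destruct (Ha (S (S a + d))%nat ltac:(lia)) as [p4 q4].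
      replace (a + S (S d))%nat with (S (S a + d)) by lia.
      symmetry. eapply fwd_unique; [| | | | | apply abs_Psin | exact st1 | exact st2]; eauto. }
  intros d; apply (proj1 (H d)).
Qed.

Lemma theta_lin (theta : nat -> R) D : (forall k, (1 <= k)%nat -> theta (S k) = theta k + D) ->
  forall k, (1 <= k)%nat -> theta k = theta 1%nat + (INR k - 1) * D.
Proof.
  intros H k hk. induction k as [|k IH]; [lia|].
  destruct (Nat.eq_dec k 0) as [->|nz]; [simpl; ring|].
  rewrite H by lia. rewrite IH by lia. rewrite S_INR. ring.
Qed.

Lemma antisym_of (theta : nat -> R) (a b : nat) (K : Z) : theta a + theta b = 2 * PI * IZR K ->
  sin (theta a) = - sin (theta b).
Proof.
  intros H. replace (theta a) with (- theta b + 2 * PI * IZR K) by lra.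
  rewrite sin_periodZ, sin_neg. reflexivity.
Qed.

Lemma extend_period (N : nat) P (theta w : nat -> R) c :
  zd_rec P theta w -> admissible P w ->
  (forall k, (1 <= k)%nat -> sin (theta (k + N)%nat) = sin (theta k)) ->
  (1 <= c)%nat -> w (c + N)%nat = w c -> periodic_from1 N w.
Proof.
  intros Hz Ha Hs hc E.
  assert (F : forall n, w (c + n + N)%nat = w (c + n)%nat).
  { induction n as [|n IH]; [now rewrite Nat.add_0_r|].
    pose proof (zd_step P theta w (c + n) Hz ltac:(lia)) as s1.
    pose proof (zd_step P theta w (c + n + N) Hz ltac:(lia)) as s2.
    rewrite Hs, IH in s2 by lia.
    destruct (Ha (c+n)%nat ltac:(lia)). destruct (Ha (S (c+n))%nat ltac:(lia)).
    destruct (Ha (S (c+n+N))%nat ltac:(lia)).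
    replace (c + S n + N)%nat with (S (c + n + N)) by lia.
    replace (c + S n)%nat with (S (c + n)) by lia.
    eapply fwd_unique; [| | | | | apply abs_Psin | exact s2 | exact s1]; eauto. }
  assert (B : forall n k, (k + n = c)%nat -> (1 <= k)%nat -> w (k + N)%nat = w k).
  { induction n as [|n IH]; intros k hk h1.
    - replace k with c by lia. exact E.
    - assert (IH' := IH (S k) ltac:(lia) ltac:(lia)).
      pose proof (zd_step P theta w k Hz h1) as s1.
      pose proof (zd_step P theta w (k + N) Hz ltac:(lia)) as s2.
      rewrite Hs in s2 by lia.
      replace (S (k + N)) with (S k + N)%nat in s2 by lia. rewrite IH' in s2.
      destruct (Ha k h1). destruct (Ha (S k) ltac:(lia)). destruct (Ha (k+N)%nat ltac:(lia)).
      symmetry. eapply bwd_unique; [| | | | | apply abs_Psin | exact s1 | exact s2]; eauto. }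
  intros k hk. destruct (le_lt_dec c k).
  - replace k with (c + (k - c))%nat by lia. apply F.
  - apply (B (c - k)%nat); lia.
Qed.

Lemma INR_N_pos N : (3 <= N)%nat -> 0 < INR N.
Proof. intros; apply lt_0_INR; lia. Qed.

Lemma sumtheta (theta : nat -> R) D k0 a b :
  (forall k, (1 <= k)%nat -> theta (S k) = theta k + D) ->
  (1 <= k0)%nat -> (1 <= a)%nat -> (1 <= b)%nat ->
  theta a + theta b = 2 * theta k0 + (INR a + INR b - 2 * INR k0) * D.
Proof.
  intros H h0 ha hb.
  rewrite (theta_lin theta D H a ha), (theta_lin theta D H b hb), (theta_lin theta D H k0 h0).
  ring.
Qed.

Lemma antisymAB N (theta : nat -> R) k0 (m : Z) (e t a b : nat) :
  (3 <= N)%nat ->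
  (forall k, (1 <= k)%nat -> theta (S k) = theta k + dtheta N) ->
  (1 <= k0)%nat -> (e <= 1)%nat ->
  theta k0 = INR e * (dtheta N / 2) + 2 * PI * IZR m ->
  (1 <= a)%nat -> (1 <= b)%nat -> (a + b + e = 2 * k0 + t * N)%nat ->
  sin (theta a) = - sin (theta b).
Proof.
  intros hN H h0 he hm ha hb hs.
  apply (antisym_of theta a b (2 * m + Z.of_nat t)%Z).
  rewrite (sumtheta theta (dtheta N) k0 a b H h0 ha hb), hm.
  assert (E : INR a + INR b + INR e = 2 * INR k0 + INR t * INR N).
  { rewrite <- !plus_INR, hs, plus_INR, !mult_INR. simpl. ring. }
  replace (INR a + INR b) with (2 * INR k0 + INR t * INR N - INR e) by lra.
  rewrite plus_IZR, mult_IZR, <- INR_IZR_INZ.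
  pose proof (INR_N_pos N hN). unfold dtheta. field. lra.
Qed.

Lemma theta_period N (theta : nat -> R) :
  (3 <= N)%nat ->
  (forall k, (1 <= k)%nat -> theta (S k) = theta k + dtheta N) ->
  forall k, (1 <= k)%nat -> theta (k + N)%nat = theta k + 2 * PI.
Proof.
  intros hN H k hk.
  rewrite (theta_lin theta _ H (k + N) ltac:(lia)), (theta_lin theta _ H k hk), plus_INR.
  pose proof (INR_N_pos N hN). unfold dtheta. field. lra.
Qed.

Lemma period_any N P (theta w : nat -> R) k0 :
  (3 <= N)%nat ->
  (forall k, (1 <= k)%nat -> theta (S k) = theta k + dtheta N) ->
  zd_rec P theta w -> admissible P w -> (1 <= k0)%nat ->
  (exists m : Z, theta k0 = 2 * PI * IZR m \/ theta k0 = dtheta N / 2 + 2 * PI * IZR m) ->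
  periodic_from1 N w.
Proof.
  intros hN H Hz Ha h0 [m Hm].
  assert (Hs : forall k, (1 <= k)%nat -> sin (theta (k + N)%nat) = sin (theta k)).
  { intros k hk. rewrite (theta_period N theta hN H k hk).
    pose proof (sin_periodZ (theta k) 1%Z) as E. rewrite <- E. f_equal. simpl. ring. }
  apply (extend_period N P theta w (k0 + N) Hz Ha Hs ltac:(lia)).
  replace (k0 + N + N)%nat with (k0 + 2 * N)%nat by lia.
  destruct Hm as [Hm|Hm].
  - assert (hm : theta k0 = INR 0 * (dtheta N / 2) + 2 * PI * IZR m) by (simpl; lra).
    assert (E1 : w (k0 + 1)%nat = w (k0 + 1 + (N - 1))%nat).
    { apply (refl_gen P theta w (2 * k0 + N) Hz Ha); [|lia|lia].
      intros a b ha hb hs. apply (antisymAB N theta k0 m 0 1 a b); auto; lia. }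
    assert (E2 : w (k0 + 1)%nat = w (k0 + 1 + (2 * N - 1))%nat).
    { apply (refl_gen P theta w (2 * k0 + 2 * N) Hz Ha); [|lia|lia].
      intros a b ha hb hs. apply (antisymAB N theta k0 m 0 2 a b); auto; lia. }
    replace (k0 + 1 + (N - 1))%nat with (k0 + N)%nat in E1 by lia.
    replace (k0 + 1 + (2 * N - 1))%nat with (k0 + 2 * N)%nat in E2 by lia.
    congruence.
  - assert (hm : theta k0 = INR 1 * (dtheta N / 2) + 2 * PI * IZR m) by (simpl; lra).
    assert (E1 : w k0 = w (k0 + N)%nat).
    { apply (refl_gen P theta w (2 * k0 - 1 + N) Hz Ha); [|lia|lia].
      intros a b ha hb hs. apply (antisymAB N theta k0 m 1 1 a b); auto; lia. }
    assert (E2 : w k0 = w (k0 + 2 * N)%nat).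
    { apply (refl_gen P theta w (2 * k0 - 1 + 2 * N) Hz Ha); [|lia|lia].
      intros a b ha hb hs. apply (antisymAB N theta k0 m 1 2 a b); auto; lia. }
    congruence.
Qed.

Lemma diff_id a x x' y y' : 0 < x -> 0 < x' -> 0 < y -> 0 < y' ->
  step a x y -> step a x' y' ->
  (y' - y) * (y * y' + a) * (x * x') = (x' - x) * (x * x' - a) * (y * y').
Proof.
  unfold step; intros hx hx' hy hy' s1 s2.
  assert (E1 : (y' - y) + a * (1 / y - 1 / y') = (x' - x) - a * (1 / x - 1 / x')) by lra.
  assert (L : (y' - y) * (y * y' + a) * (x * x') = ((y' - y) + a * (1 / y - 1 / y')) * (x * x' * (y * y')))
    by (field; lra).
  assert (R0 : (x' - x) * (x * x' - a) * (y * y') = ((x' - x) - a * (1 / x - 1 / x')) * (x * x' * (y * y')))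
    by (field; lra).
  rewrite L, R0, E1. reflexivity.
Qed.

Lemma diff_nz a p x x' y y' : 0 < x -> 0 < x' -> 0 < y -> 0 < y' ->
  p < x ^ 2 -> p < x' ^ 2 -> Rabs a <= p ->
  step a x y -> step a x' y' -> x' - x <> 0 -> y' - y <> 0.
Proof.
  intros hx hx' hy hy' h1 h2 ha s1 s2 nz e.
  pose proof (diff_id a x x' y y' hx hx' hy hy' s1 s2) as E.
  rewrite e in E. pose proof (prod_gt p x x' hx hx' h1 h2).
  assert (a <= p) by (unfold Rabs in ha; destruct (Rcase_abs a); lra).
  assert (0 < x * x' - a) by lra. assert (0 < y * y') by nra.
  assert (Z0 : (x' - x) * ((x * x' - a) * (y * y')) = 0) by lra.
  apply Rmult_integral in Z0. destruct Z0 as [Z0|Z0]; [lra|].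
  apply Rmult_integral in Z0; lra.
Qed.

Lemma diff_bound a p q x x' y y' : 0 < x -> 0 < x' -> 0 < y -> 0 < y' ->
  p < x ^ 2 -> p < x' ^ 2 -> p < y ^ 2 -> p < y' ^ 2 -> Rabs a <= p ->
  0 <= q -> q * q = p ->
  step a x y -> step a x' y' ->
  Rabs (y' - y) * (y - q) <= 2 * y * Rabs (x' - x).
Proof.
  intros hx hx' hy hy' h1 h2 h3 h4 ha hq hqq s1 s2.
  pose proof (diff_id a x x' y y' hx hx' hy hy' s1 s2) as E.
  pose proof (prod_gt p x x' hx hx' h1 h2). pose proof (prod_gt p y y' hy hy' h3 h4).
  assert (-p <= a /\ a <= p) by (unfold Rabs in ha; destruct (Rcase_abs a); lra).
  assert (qy' : q <= y') by nra. assert (qy : q < y) by nra.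
  assert (A1 : 0 < y * y' + a) by lra. assert (A2 : 0 < x * x' - a) by lra.
  assert (E' : Rabs (y' - y) * (y * y' + a) * (x * x') = Rabs (x' - x) * (x * x' - a) * (y * y')).
  { apply (f_equal Rabs) in E. rewrite (Rabs_mult ((y' - y) * _)), (Rabs_mult (y' - y)), (Rabs_mult ((x' - x) * _)), (Rabs_mult (x' - x)) in E.
    rewrite (Rabs_pos_eq (y * y' + a)), (Rabs_pos_eq (x * x' - a)) in E by lra.
    rewrite (Rabs_pos_eq (x * x')), (Rabs_pos_eq (y * y')) in E by nra. exact E. }
  set (U := Rabs (y' - y)) in *. set (V := Rabs (x' - x)) in *.
  assert (hU : 0 <= U) by apply Rabs_pos. assert (hV : 0 <= V) by apply Rabs_pos.
  assert (b1 : y' * (y - q) <= y * y' + a) by nra.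
  assert (b2 : x * x' - a <= 2 * (x * x')) by lra.
  assert (K : U * (y - q) * ((y * y' + a) * (x * x')) <= 2 * y * V * ((y * y' + a) * (x * x'))).
  { replace (U * (y - q) * ((y * y' + a) * (x * x'))) with
      ((V * y) * ((x * x' - a) * (y' * (y - q)))).
    2:{ symmetry; transitivity ((y - q) * (U * (y * y' + a) * (x * x'))); [ring|]. rewrite E'. ring. }
    replace (2 * y * V * ((y * y' + a) * (x * x'))) with
      ((V * y) * ((2 * (x * x')) * (y * y' + a))) by ring.
    apply Rmult_le_compat_l; [nra|].
    apply Rmult_le_compat; nra. }
  assert (0 < (y * y' + a) * (x * x')) by nra.
  apply Rmult_le_reg_r in K; lra.
Qed.

Fixpoint Qf (L : nat -> R) (k1 n : nat) : R :=
  match n with O => 1 | S n => Qf L k1 n * L (k1 + S n)%nat end.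

Lemma Qf_ge1 L k1 n : (forall k, 1 <= L k) -> 1 <= Qf L k1 n.
Proof. intros H; induction n; simpl; [lra|]. specialize (H (k1 + S n)%nat). nra. Qed.

Lemma Qf_mono L k1 n m : (forall k, 1 <= L k) -> (n <= m)%nat -> Qf L k1 n <= Qf L k1 m.
Proof.
  intros H hnm. induction hnm; [lra|]. simpl.
  pose proof (Qf_ge1 L k1 m H). specialize (H (k1 + S m)%nat). nra.
Qed.

Lemma mult_period N (u : nat -> R) : periodic_from1 N u ->
  forall m k, (1 <= k)%nat -> u (k + m * N)%nat = u k.
Proof.
  intros H m; induction m as [|m IH]; intros k hk.
  - now rewrite Nat.add_0_r.
  - replace (k + S m * N)%nat with (k + m * N + N)%nat by lia.
    rewrite H by lia. apply IH, hk.
Qed.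

Lemma reach k1 N k : (3 <= N)%nat -> (1 <= k)%nat -> (k + k1 * N = k1 + (k + k1 * N - k1))%nat.
Proof. intros. nia. Qed.

Theorem corollary1 (N : nat) (P : R) (theta omega : nat -> R) (k0 k1 : nat) :
  (3 <= N)%nat ->
  P <> 0 ->
  (forall k : nat, (1 <= k)%nat -> theta (S k) = theta k + dtheta N) ->
  zd_rec P theta omega ->
  admissible P omega ->
  (1 <= k0)%nat ->
  (exists m : Z, theta k0 = 2 * PI * IZR m \/ theta k0 = dtheta N / 2 + 2 * PI * IZR m) ->
  (1 <= k1)%nat ->
  (forall k : nat, (1 <= k)%nat -> theta (k + N)%nat = theta k + 2 * PI) /\
  periodic_from1 N omega /\
  (forall (eps : R) (omega' : nat -> R), eps <> 0 ->
     perturbed P theta omega k1 eps omega' ->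
     periodic_from1 N omega' /\ (forall k : nat, (1 <= k)%nat -> omega' k <> omega k)) /\
  (forall eta : R, 0 < eta -> exists delta : R, 0 < delta /\
     forall (eps : R) (omega' : nat -> R), eps <> 0 -> Rabs eps < delta ->
       perturbed P theta omega k1 eps omega' ->
       forall k : nat, (1 <= k)%nat -> Rabs (omega' k - omega k) <= eta).
Proof.
  intros hN hP Hth Hz Ha h0 Hm hk1.
  assert (per := period_any N P theta omega k0 hN Hth Hz Ha h0 Hm).
  split; [exact (theta_period N theta hN Hth)|].
  split; [exact per|].
  set (q := sqrt (Rabs P)).
  assert (hq : 0 <= q) by apply sqrt_pos.
  assert (hqq : q * q = Rabs P) by (apply sqrt_sqrt, Rabs_pos).
  split.
  - intros eps w' neps [e1 [hz' ha']].
    assert (per' := period_any N P theta w' k0 hN Hth hz' ha' h0 Hm).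
    split; [exact per'|].
    assert (F : forall n, w' (k1 + n)%nat - omega (k1 + n)%nat <> 0).
    { induction n as [|n IH].
      - rewrite Nat.add_0_r, e1. lra.
      - replace (k1 + S n)%nat with (S (k1 + n)) by lia.
        destruct (Ha (k1 + n)%nat ltac:(lia)). destruct (Ha (S (k1 + n))%nat ltac:(lia)).
        destruct (ha' (k1 + n)%nat ltac:(lia)). destruct (ha' (S (k1 + n))%nat ltac:(lia)).
        eapply diff_nz; [| | | | | | apply abs_Psin | apply (zd_step P theta omega (k1 + n) Hz ltac:(lia))
          | apply (zd_step P theta w' (k1 + n) hz' ltac:(lia)) | exact IH]; eauto. }
    intros k hk E.
    rewrite <- (mult_period N w' per' k1 k hk), <- (mult_period N omega per k1 k hk) in E.
    rewrite (reach k1 N k hN hk) in E. apply (F (k + k1 * N - k1)%nat). lra.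
  - set (L := fun j => Rmax 1 (2 * omega j / (omega j - q))).
    assert (HL : forall j, 1 <= L j) by (intros; apply Rmax_l).
    set (QN := Qf L k1 N).
    assert (hQ : 1 <= QN) by (apply Qf_ge1, HL).
    intros eta heta. exists (eta / QN). split; [apply Rdiv_lt_0_compat; lra|].
    intros eps w' neps heps [e1 [hz' ha']].
    assert (per' := period_any N P theta w' k0 hN Hth hz' ha' h0 Hm).
    assert (Lip : forall k, (1 <= k)%nat ->
      Rabs (w' (S k) - omega (S k)) <= L (S k) * Rabs (w' k - omega k)).
    { intros k hk.
      destruct (Ha k hk). destruct (Ha (S k) ltac:(lia)).
      destruct (ha' k hk). destruct (ha' (S k) ltac:(lia)).
      assert (B := diff_bound _ (Rabs P) q _ _ _ _ H H3 H1 H5 H0 H4 H2 H6 (abs_Psin P (theta k)) hq hqq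
                   (zd_step P theta omega k Hz hk) (zd_step P theta w' k hz' hk)).
      set (y := omega (S k)) in *.
      assert (qy : q < y) by nra.
      assert (B2 : Rabs (w' (S k) - y) <= (2 * y * Rabs (w' k - omega k)) * / (y - q)).
      { apply Rmult_le_reg_r with (y - q); [lra|].
        rewrite Rmult_assoc, Rinv_l by lra. lra. }
      apply Rle_trans with (1 := B2).
      replace (2 * y * Rabs (w' k - omega k) * / (y - q)) with
        ((2 * y / (y - q)) * Rabs (w' k - omega k)) by (field; lra).
      apply Rmult_le_compat_r; [apply Rabs_pos|]. apply Rmax_r. }
    assert (F1 : forall n, Rabs (w' (k1 + n)%nat - omega (k1 + n)%nat) <= Qf L k1 n * Rabs eps).
    { induction n as [|n IH].
      - rewrite Nat.add_0_r, e1. simpl. replace (omega k1 + eps - omega k1) with eps by ring. lra.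
      - simpl. replace (k1 + S n)%nat with (S (k1 + n)) by lia.
        apply Rle_trans with (1 := Lip (k1 + n)%nat ltac:(lia)).
        replace (S (k1 + n)) with (k1 + S n)%nat by lia.
        pose proof (HL (k1 + S n)%nat). pose proof (Rabs_pos eps).
        rewrite (Rmult_comm (Qf L k1 n)), Rmult_assoc. apply Rmult_le_compat_l; lra. }
    assert (F2 : forall B n, (n <= B)%nat -> Rabs (w' (k1 + n)%nat - omega (k1 + n)%nat) <= QN * Rabs eps).
    { induction B as [|B IH]; intros n hn.
      - apply Rle_trans with (1 := F1 n). apply Rmult_le_compat_r; [apply Rabs_pos|].
        apply Qf_mono; [exact HL|lia].
      - destruct (le_lt_dec n N).
        + apply Rle_trans with (1 := F1 n). apply Rmult_le_compat_r; [apply Rabs_pos|].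
          apply Qf_mono; [exact HL|lia].
        + replace (k1 + n)%nat with (k1 + (n - N) + N)%nat by lia.
          rewrite per, per' by lia. apply IH. lia. }
    intros k hk.
    rewrite <- (mult_period N w' per' k1 k hk), <- (mult_period N omega per k1 k hk).
    rewrite (reach k1 N k hN hk).
    apply Rle_trans with (1 := F2 _ _ (Nat.le_refl _)).
    assert (QN * Rabs eps < QN * (eta / QN)) by (apply Rmult_lt_compat_l; lra).
    replace (QN * (eta / QN)) with eta in H by (field; lra). lra.
Qed.
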